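(* Let $X,Z\in\mathbb{R}^{n\times r}$ with $\mathbf{e}:=\mathrm{vec}(XX^{T}-ZZ^{T})\ne0$ and $\sigma_{r}(X)>0$, and let $\alpha=\|Z_{\perp}Z_{\perp}^{T}\|_{F}/\|XX^{T}-ZZ^{T}\|_{F}$ where $Z_{\perp}=(I-XX^{\dagger})Z$. Then for every $w\in\mathbb{R}^{n^{2}}$ with $\|\mathbf{e}\|\,\|(I-\mathbf{J}\mathbf{J}^{\dagger})w\|\le1$, $$\max_{y\in\mathbb{R}^{nr}}\{\mathbf{e}^{T}(\mathbf{J}y-w):\|\mathbf{e}\|\,\|\mathbf{J}y-w\|=1\}=\sqrt{1-\alpha^{2}}\sqrt{1-\|\mathbf{e}\|^{2}\|(I-\mathbf{J}\mathbf{J}^{\dagger})w\|^{2}}-\mathbf{e}^{T}(I-\mathbf{J}\mathbf{J}^{\dagger})w.$$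
   Context: $\mathrm{vec}$ is column-stacking vectorization; $\mathbf{J}\in\mathbb{R}^{n^{2}\times nr}$ satisfies $\mathbf{J}\,\mathrm{vec}(Y)=\mathrm{vec}(XY^{T}+YX^{T})$ for all $Y\in\mathbb{R}^{n\times r}$; $\dagger$ denotes the Moore–Penrose pseudoinverse; $\sigma_{r}(X)$ is the $r$-th largest singular value of $X$. *)

(* Defs.v *)
From HB Require Import structures.
From mathcomp Require Import all_boot all_order all_algebra.
From mathcomp Require Import reals.
From Stdlib Require Import ClassicalEpsilon.
Set Implicit Arguments. Unset Strict Implicit. Unset Printing Implicit Defensive.
Import Order.TTheory GRing.Theory Num.Theory.
Local Open Scope ring_scope.

Section Defs.
Variable R : realType.

(* column-stacking vectorization: vec A = mxvec (A^T), as a column vector *)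
Definition vec (m c : nat) (A : 'M[R]_(m, c)) : 'cV[R]_(c * m) := (mxvec A^T)^T.

Definition fnorm (m c : nat) (A : 'M[R]_(m, c)) : R :=
  Num.sqrt (\sum_(i < m) \sum_(j < c) A i j ^+ 2).

Definition dotv (N : nat) (u v : 'cV[R]_N) : R := \sum_(i < N) u i 0 * v i 0.

Definition penrose (m c : nat) (A : 'M[R]_(m, c)) (B : 'M[R]_(c, m)) : Prop :=
  [/\ A *m B *m A = A, B *m A *m B = B,
      (A *m B)^T = A *m B & (B *m A)^T = B *m A].

Definition pinv (m c : nat) (A : 'M[R]_(m, c)) : 'M[R]_(c, m) :=
  epsilon (inhabits 0) (penrose A).
End Defs.

(* Main.v *)
Require Import Defs.
From HB Require Import structures.
From mathcomp Require Import all_boot all_order all_algebra.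
From mathcomp Require Import reals.
From Stdlib Require Import ClassicalEpsilon.
From mathcomp Require Import ring lra.
Set Implicit Arguments. Unset Strict Implicit. Unset Printing Implicit Defensive.
Import Order.TTheory GRing.Theory Num.Theory.
Local Open Scope ring_scope.

Section Aux.
Variable R : realType.

Lemma dotvE N (u v : 'cV[R]_N) : dotv u v = (u^T *m v) 0 0.
Proof. by rewrite /dotv mxE; apply: eq_bigr => i _; rewrite mxE. Qed.

Lemma dotvC N (u v : 'cV[R]_N) : dotv u v = dotv v u.
Proof. by rewrite /dotv; apply: eq_bigr => i _; rewrite mulrC. Qed.

Lemma dotvDl N (u v w : 'cV[R]_N) : dotv (u + v) w = dotv u w + dotv v w.
Proof. by rewrite /dotv -big_split; apply: eq_bigr => i _; rewrite mxE mulrDl. Qed.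

Lemma dotvDr N (u v w : 'cV[R]_N) : dotv w (u + v) = dotv w u + dotv w v.
Proof. by rewrite dotvC dotvDl !(dotvC w). Qed.

Lemma dotvNl N (u w : 'cV[R]_N) : dotv (- u) w = - dotv u w.
Proof. by rewrite /dotv -sumrN; apply: eq_bigr => i _; rewrite mxE mulNr. Qed.

Lemma dotvNr N (u w : 'cV[R]_N) : dotv w (- u) = - dotv w u.
Proof. by rewrite dotvC dotvNl dotvC. Qed.

Lemma dotvBl N (u v w : 'cV[R]_N) : dotv (u - v) w = dotv u w - dotv v w.
Proof. by rewrite dotvDl dotvNl. Qed.

Lemma dotvBr N (u v w : 'cV[R]_N) : dotv w (u - v) = dotv w u - dotv w v.
Proof. by rewrite dotvDr dotvNr. Qed.

Lemma dotvZl N a (u w : 'cV[R]_N) : dotv (a *: u) w = a * dotv u w.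
Proof. by rewrite /dotv mulr_sumr; apply: eq_bigr => i _; rewrite mxE mulrA. Qed.

Lemma dotvZr N a (u w : 'cV[R]_N) : dotv w (a *: u) = a * dotv w u.
Proof. by rewrite dotvC dotvZl dotvC. Qed.

Lemma dotv_mull N K (A : 'M[R]_(K, N)) u v : dotv (A *m u) v = dotv u (A^T *m v).
Proof. by rewrite !dotvE trmx_mul mulmxA. Qed.

Lemma dotv_ge0 N (u : 'cV[R]_N) : 0 <= dotv u u.
Proof. by rewrite /dotv; apply: sumr_ge0 => i _; rewrite -expr2 sqr_ge0. Qed.

Lemma dotv_eq0 N (u : 'cV[R]_N) : dotv u u = 0 -> u = 0.
Proof.
move=> /eqP; rewrite /dotv psumr_eq0 => [/allP H|i _]; last by rewrite -expr2 sqr_ge0.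
apply/matrixP => i j; rewrite (ord1 j) mxE.
by have := H i (mem_index_enum _); rewrite -expr2 sqrf_eq0 => /eqP.
Qed.

Lemma fnorm_cV N (u : 'cV[R]_N) : fnorm u = Num.sqrt (dotv u u).
Proof. by rewrite /fnorm /dotv; congr Num.sqrt; apply: eq_bigr => i _; rewrite big_ord1 expr2. Qed.

Lemma CS N (u v : 'cV[R]_N) : dotv u v <= Num.sqrt (dotv u u) * Num.sqrt (dotv v v).
Proof.
have [v0|vn0] := eqVneq (dotv v v) 0.
  by rewrite (dotv_eq0 v0) {1}/dotv big1 ?mulr_ge0 ?sqrtr_ge0 // => i _; rewrite mxE mulr0.
have vp : 0 < dotv v v by rewrite lt_def vn0 dotv_ge0.
set w := dotv v v *: u - dotv u v *: v.
have := dotv_ge0 w.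
rewrite /w dotvBl !dotvBr !dotvZl !dotvZr (dotvC v u).
move=> H.
have H2 : dotv u v ^+ 2 <= dotv u u * dotv v v.
  rewrite -subr_ge0; rewrite -(pmulr_rge0 _ vp).
  move: H; congr (_ <= _); ring.
rewrite -sqrtrM ?dotv_ge0 //.
apply: le_trans (ler_norm _) _.
by rewrite -sqrtr_sqr ler_sqrt // mulr_ge0 ?dotv_ge0.
Qed.


Lemma mul_tr_eq0 p q (A : 'M[R]_(p, q)) : A *m A^T = 0 -> A = 0.
Proof.
move=> H; apply/matrixP => i j; rewrite mxE.
have : (A *m A^T) i i = 0 by rewrite H mxE.
rewrite mxE => /eqP; rewrite psumr_eq0 => [/allP Hi|k _]; last first.
  by rewrite mxE -expr2 sqr_ge0.
by have := Hi j (mem_index_enum _); rewrite mxE -expr2 sqrf_eq0 => /eqP.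
Qed.

Lemma unit_AAt k m (D : 'M[R]_(k, m)) : row_free D -> D *m D^T \in unitmx.
Proof.
move=> fD; rewrite -row_free_unit -kermx_eq0; apply/eqP.
set K := kermx _.
have H := mulmx_ker (D *m D^T); rewrite -/K in H.
have H2 : (K *m D) *m (K *m D)^T = 0.
  by rewrite trmx_mul !mulmxA -(mulmxA K) H mul0mx.
have H3 := mul_tr_eq0 H2.
by apply: (row_free_inj fD); rewrite H3 mul0mx.
Qed.

Lemma penrose_fact m k c (C : 'M[R]_(m, k)) (F : 'M[R]_(k, c)) :
  C^T *m C \in unitmx -> F *m F^T \in unitmx -> exists B, penrose (C *m F) B.
Proof.
move=> uG uH.
set G := C^T *m C in uG *; set H := F *m F^T in uH *.
have FH : F *m (F^T *m invmx H) = 1%:M by rewrite mulmxA mulmxV.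
have GC : (invmx G *m C^T) *m C = 1%:M by rewrite -mulmxA mulVmx.
have sG : (invmx G)^T = invmx G by rewrite trmx_inv /G trmx_mul trmxK.
have sH : (invmx H)^T = invmx H by rewrite trmx_inv /H trmx_mul trmxK.
exists ((F^T *m invmx H) *m (invmx G *m C^T)).
have AB : C *m F *m ((F^T *m invmx H) *m (invmx G *m C^T)) = C *m (invmx G *m C^T).
  by rewrite mulmxA -(mulmxA C) FH mulmx1.
have BA : ((F^T *m invmx H) *m (invmx G *m C^T)) *m (C *m F) = (F^T *m invmx H) *m F.
  by rewrite -mulmxA (mulmxA _ C) GC mul1mx.
split.
- by rewrite AB mulmxA -(mulmxA C) GC mulmx1.
- by rewrite BA -(mulmxA _ F) (mulmxA F) FH mul1mx.
- by rewrite AB !trmx_mul trmxK sG mulmxA.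
- by rewrite BA !trmx_mul trmxK sH mulmxA.
Qed.

Lemma penrose_ex m c (A : 'M[R]_(m, c)) : exists B, penrose A B.
Proof.
rewrite -[A]mulmx_base; apply: penrose_fact.
  have fC : row_free (col_base A)^T by rewrite /row_free mxrank_tr; apply: col_base_full.
  by have := unit_AAt fC; rewrite trmxK.
by apply: unit_AAt; apply: row_base_free.
Qed.

Lemma pinvP m c (A : 'M[R]_(m, c)) : penrose A (pinv A).
Proof. by rewrite /pinv; apply: epsilon_spec; apply: penrose_ex. Qed.


Lemma vecB m c (A B : 'M[R]_(m, c)) : vec (A - B) = vec A - vec B.
Proof. by rewrite /vec !linearB. Qed.

Lemma vecD m c (A B : 'M[R]_(m, c)) : vec (A + B) = vec A + vec B.
Proof. by rewrite /vec !linearD. Qed.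

Lemma vecN m c (A : 'M[R]_(m, c)) : vec (- A) = - vec A.
Proof. by rewrite /vec !linearN. Qed.

Lemma vecK m c (A : 'M[R]_(m, c)) : (vec_mx (vec A)^T)^T = A.
Proof. by rewrite /vec trmxK mxvecK trmxK. Qed.

Lemma vec_surj m c (v : 'cV[R]_(c * m)) : vec ((vec_mx v^T)^T : 'M_(m, c)) = v.
Proof. by rewrite /vec trmxK vec_mxK trmxK. Qed.

Lemma vec_eq0 m c (A : 'M[R]_(m, c)) : vec A = 0 -> A = 0.
Proof. by move=> H; rewrite -(vecK A) H trmx0 linear0 trmx0. Qed.

Lemma dot_vec m c (A B : 'M[R]_(m, c)) :
  dotv (vec A) (vec B) = \sum_(i < m) \sum_(j < c) A i j * B i j.
Proof.
rewrite /dotv (reindex (uncurry (@mxvec_index c m))); last first.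
  have [g H1 H2] := curry_mxvec_bij c m; exists g => x _; [exact: H1 | exact: H2].
rewrite exchange_big pair_big /=; apply: eq_bigr => -[j i] _ /=.
by rewrite !mxE !mxvecE !mxE.
Qed.

Lemma fnorm_vec m c (A : 'M[R]_(m, c)) : fnorm (vec A) = fnorm A.
Proof.
rewrite fnorm_cV dot_vec /fnorm; by [].
Qed.


Lemma trace_dot m c (A B : 'M[R]_(m, c)) :
  \sum_(i < m) \sum_(j < c) A i j * B i j = \tr (A *m B^T).
Proof.
rewrite /mxtrace; apply: eq_bigr => i _; rewrite mxE; apply: eq_bigr => j _.
by rewrite mxE.
Qed.

Lemma dotv0r N (u : 'cV[R]_N) : dotv u 0 = 0.
Proof. by rewrite /dotv big1 // => i _; rewrite mxE mulr0. Qed.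

Lemma dotv0l N (u : 'cV[R]_N) : dotv 0 u = 0.
Proof. by rewrite dotvC dotv0r. Qed.

Lemma vec0 m c : vec (0 : 'M[R]_(m, c)) = 0.
Proof. by rewrite /vec trmx0 linear0 trmx0. Qed.

Lemma dotvNN N (u : 'cV[R]_N) : dotv (- u) (- u) = dotv u u.
Proof. by rewrite dotvNl dotvNr opprK. Qed.


End Aux.

Unset Implicit Arguments.
Set Strict Implicit.

Theorem lemma17 (R : realType) (n r : nat) (X Z : 'M[R]_(n, r))
  (J : 'M[R]_(n * n, r * n))
  (HJ : forall Y : 'M[R]_(n, r), J *m vec Y = vec (X *m Y^T + Y *m X^T))
  (he : vec (X *m X^T - Z *m Z^T) != 0)
  (hX : \rank X = r)
  (w : 'cV[R]_(n * n)) :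
  let e := vec (X *m X^T - Z *m Z^T) in
  let Zp := (1%:M - X *m pinv X) *m Z in
  let alpha := fnorm (Zp *m Zp^T) / fnorm (X *m X^T - Z *m Z^T) in
  let Pw := (1%:M - J *m pinv J) *m w in
  let M := Num.sqrt (1 - alpha ^+ 2) * Num.sqrt (1 - fnorm e ^+ 2 * fnorm Pw ^+ 2)
           - dotv e Pw in
  fnorm e * fnorm Pw <= 1 ->
  (exists y : 'cV[R]_(r * n),
      fnorm e * fnorm (J *m y - w) = 1 /\ dotv e (J *m y - w) = M) /\
  (forall y : 'cV[R]_(r * n),
      fnorm e * fnorm (J *m y - w) = 1 -> dotv e (J *m y - w) <= M).
Proof.
cbv zeta => hle.
set BX := pinv X in hle *; have [pX1 pX2 pX3 pX4] := pinvP X.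
set PX := X *m BX in pX3 hle *.
set Q := 1%:M - PX in hle *.
set Zp := Q *m Z in hle *.
have QX : Q *m X = 0 by rewrite /Q mulmxBl mul1mx pX1 subrr.
have Qs : Q^T = Q by rewrite /Q linearB /= trmx1 pX3.
have PXs : PX^T = PX by [].
have eQ : Q = 1%:M - PX by [].
clearbody Q.
set S := X *m X^T - Z *m Z^T in he hle *.
set e := vec S in he hle *.
have sS : S^T = S by rewrite /S linearB /= !trmx_mul !trmxK.
have eS : S = X *m X^T - Z *m Z^T by [].
clearbody S.
have QSQ : Q *m S *m Q = - (Zp *m Zp^T).
  rewrite eS /Zp mulmxBr mulmxBl !mulmxA QX !mul0mx sub0r trmx_mul Qs.
  by rewrite !mulmxA.
have [Y hY] : exists Y : 'M[R]_(n, r), X *m Y^T + Y *m X^T = S - Q *m S *m Q.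
  exists (Q *m S *m BX^T + 2^-1 *: (X *m (BX *m S *m BX^T))).
  have BXX : BX^T *m X^T = PX by rewrite -trmx_mul.
  have YXt : (Q *m S *m BX^T + 2^-1 *: (X *m (BX *m S *m BX^T))) *m X^T
      = Q *m S *m PX + 2^-1 *: (PX *m S *m PX).
    by rewrite mulmxDl -scalemxAl -!mulmxA BXX !mulmxA.
  set Y := (Q *m S *m BX^T + 2^-1 *: (X *m (BX *m S *m BX^T))) in YXt *.
  have -> : X *m Y^T = (Y *m X^T)^T by rewrite trmx_mul trmxK.
  rewrite YXt linearD /= linearZ /= !trmx_mul !BXX sS Qs.
  have ePX : PX = 1%:M - Q by rewrite eQ opprB addrC subrK.
  rewrite ePX; rewrite ?(mulmxBl, mulmxBr, mul1mx, mulmx1) !mulmxA.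
  move: (Q *m S *m Q) (Q *m S) (S *m Q) => c a b.
  by apply/matrixP => i j; rewrite !mxE; field.
set BJ := pinv J; have [pJ1 pJ2 pJ3 pJ4] := pinvP J.
set P := J *m BJ in pJ3 hle *.
set Pw := (1%:M - P) *m w in hle *.
have Ps : P^T = P by [].
have PJ : P *m J = J by [].
have PP : P *m P = P by rewrite /P mulmxA pJ1.
set q := vec (Q *m S *m Q).
have qperp : forall v, dotv q (J *m v) = 0.
  move=> v; rewrite -(vec_surj v) HJ /q dot_vec trace_dot.
  set Y' := (vec_mx v^T)^T.
  rewrite linearD /= !trmx_mul !trmxK mulmxDr.
  have QSQX : Q *m S *m Q *m X = 0 by rewrite -mulmxA QX mulmx0.
  have XtQ : X^T *m Q = 0 by rewrite -Qs -trmx_mul QX trmx0.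
  rewrite mxtraceD (mulmxA _ X) QSQX mul0mx mxtrace0 addr0.
  by rewrite mulmxA mxtrace_mulC !mulmxA XtQ !mul0mx mxtrace0.
have Pq : P *m q = 0.
  apply: dotv_eq0; rewrite dotv_mull Ps mulmxA PP.
  by rewrite /P -mulmxA qperp.
have Pe : P *m e = e - q.
  have : e - q = J *m vec Y by rewrite HJ hY vecB.
  move=> eq; apply/eqP; rewrite -subr_eq0; apply/eqP.
  have : P *m (e - q) = e - q by rewrite eq mulmxA PJ.
  rewrite mulmxBr Pq subr0 => ->; exact: subrr.
have fS : fnorm S = Num.sqrt (dotv e e) by rewrite -fnorm_vec fnorm_cV.
have fZ : fnorm (Zp *m Zp^T) = Num.sqrt (dotv q q).
  by rewrite -fnorm_vec fnorm_cV /q QSQ vecN dotvNN.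
have PPw : P *m Pw = 0 by rewrite /Pw mulmxA mulmxBr mulmx1 PP subrr mul0mx.
have ab : dotv e e = dotv (P *m e) (P *m e) + dotv q q.
  have ee : e = P *m e + q by rewrite Pe subrK.
  rewrite {1 2}ee dotvDl !dotvDr (dotvC q (P *m e)).
  have -> : dotv (P *m e) q = 0 by rewrite dotv_mull Ps Pq dotv0r.
  by rewrite addr0 add0r.
rewrite fS fZ !fnorm_cV in hle *.
set a := dotv e e in ab hle *.
set b := dotv q q in ab *.
set p := dotv (P *m e) (P *m e) in ab *.
set s := dotv Pw Pw in hle *.
have pE : p = dotv (P *m e) (P *m e) by [].
have sE : s = dotv Pw Pw by [].
have aE : a = dotv e e by [].
have bE : b = dotv q q by [].
clearbody a b p s.
have a0 : 0 < a.
  rewrite aE lt_def dotv_ge0 andbT; apply/eqP => /dotv_eq0 H; by rewrite H eqxx in he.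
have b0 : 0 <= b by rewrite bE; apply: dotv_ge0.
have p0 : 0 <= p by rewrite pE; apply: dotv_ge0.
have s0 : 0 <= s by rewrite sE; apply: dotv_ge0.
have sa0 : 0 < Num.sqrt a by rewrite sqrtr_gt0.
have alpha2 : 1 - (Num.sqrt b / Num.sqrt a) ^+ 2 = p / a.
  rewrite expr_div_n !sqr_sqrtr; last 2 first; [exact: ltW | exact: b0 |].
  rewrite ab; field.
  by rewrite -ab gt_eqF.
have sqa : Num.sqrt a ^+ 2 = a by rewrite sqr_sqrtr // ltW.
have sqs : Num.sqrt s ^+ 2 = s by rewrite sqr_sqrtr.
rewrite alpha2 sqa sqs.
have spa : Num.sqrt (p / a) = Num.sqrt p / Num.sqrt a.
  by rewrite sqrtrM // sqrtrV // ltW.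
rewrite spa.
have as1 : a * s <= 1.
  move: hle; rewrite -sqrtrM; last exact: ltW.
  by rewrite -{1}sqrtr1 ler_sqrt.
set k := Num.sqrt (1 - a * s).
have kk : k ^+ 2 = 1 - a * s by rewrite sqr_sqrtr // subr_ge0.
have hJy : forall y, J *m y - w = (J *m y - P *m w) - Pw /\
    P *m (J *m y - P *m w) = J *m y - P *m w.
  move=> y; split; first by rewrite /Pw mulmxBl mul1mx opprB addrA subrK.
  by rewrite mulmxBr !mulmxA PJ.
have dec : forall u, P *m u = u ->
    dotv (u - Pw) (u - Pw) = dotv u u + s /\
    dotv e (u - Pw) = dotv (P *m e) u - dotv e Pw.
  move=> u Pu.
  have uPw : dotv u Pw = 0 by rewrite -Pu dotv_mull Ps PPw dotv0r.
  split.
    by rewrite dotvBl !dotvBr uPw (dotvC Pw u) uPw !subr0 sE sub0r opprK.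
  by rewrite dotvBr -{1}Pu dotvC dotv_mull Ps dotvC.
split; last first.
  move=> y; rewrite fnorm_cV; have [-> Pu] := hJy y.
  have [H1 H2] := dec _ Pu; rewrite H1 H2.
  set u := J *m y - P *m w in Pu H1 H2 *.
  set uu := dotv u u.
  have uu0 : 0 <= uu by apply: dotv_ge0.
  move=> hy.
  have Ha : a * (uu + s) = 1.
    move: hy; rewrite -sqrtrM; last exact: ltW.
    move=> hy.
    have := congr1 (fun x => x ^+ 2) hy; rewrite /= sqr_sqrtr ?expr1n //.
    by rewrite mulr_ge0 ?addr_ge0 // ltW.
  have ke : k = Num.sqrt a * Num.sqrt uu.
    rewrite -sqrtrM; last exact: ltW.
    congr Num.sqrt; rewrite -Ha; ring.
  rewrite lerD2r ke.
  have -> : Num.sqrt p / Num.sqrt a * (Num.sqrt a * Num.sqrt uu) = Num.sqrt p * Num.sqrt uu.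
    by field; rewrite gt_eqF.
  by rewrite pE /uu; apply: CS.
have [v0 [g0 hv0]] : exists v0, 0 < dotv (J *m v0) (J *m v0) /\
    dotv (P *m e) (J *m v0) = Num.sqrt p * Num.sqrt (dotv (J *m v0) (J *m v0)).
  have [Pe0|Pe0] := eqVneq (P *m e) 0.
    exists (vec X); rewrite pE Pe0 !dotv0l sqrtr0 mul0r; split => //.
    rewrite lt_def dotv_ge0 andbT; apply/eqP => /dotv_eq0.
    rewrite HJ => /vec_eq0 H.
    have H2 : (X + X) *m (X + X)^T = 0.
      by rewrite linearD /= mulmxDr !mulmxDl H addr0.
    have X0 := mul_tr_eq0 H2.
    have X00 : X = 0.
      apply/matrixP => i j; have := congr1 (fun M : 'M[R]_(n, r) => M i j) X0.
      by rewrite !mxE => /eqP; rewrite -mulr2n mulrn_eq0 /= => /eqP.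
    move: hX; rewrite X00 mxrank0 => r0; subst r.
    by move: he; rewrite /e eS X00 (thinmx0 Z) mul0mx subrr vec0 eqxx.
  exists (BJ *m e); rewrite mulmxA -/P; split.
    rewrite lt_def dotv_ge0 andbT; apply/eqP => /dotv_eq0 H; by rewrite H eqxx in Pe0.
  by rewrite -pE -expr2 sqr_sqrtr.
set g := dotv (J *m v0) (J *m v0) in g0 hv0.
have sg0 : 0 < Num.sqrt g by rewrite sqrtr_gt0.
set t := k / (Num.sqrt a * Num.sqrt g).
exists (t *: v0 + BJ *m w); rewrite fnorm_cV.
have [-> Pu] := hJy (t *: v0 + BJ *m w).
have ue : J *m (t *: v0 + BJ *m w) - P *m w = t *: (J *m v0).
  by rewrite mulmxDr -scalemxAr mulmxA -/P addrK.
have [H1 H2] := dec _ Pu; rewrite H1 H2 ue !dotvZl !dotvZr -/g hv0.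
have tt : t * t = (1 - a * s) / (a * g).
  by rewrite /t -expr2 expr_div_n exprMn kk sqa sqr_sqrtr // ltW.
split.
  rewrite -sqrtrM; last exact: ltW.
  rewrite mulrA tt.
  have -> : a * ((1 - a * s) / (a * g) * g + s) = 1.
    by field; rewrite ?gt_eqF.
  exact: sqrtr1.
congr (_ - _); rewrite /t; field.
by rewrite !gt_eqF.
Qed.
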